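(* Let $r\ge1$ and let $\mathbf{Y}^r$ be the $r$-fold Cartesian product of Young's lattice. For every $n\ge0$, the cokernel of the up map $U_n:\mathbb{Z}^{p_n}\to\mathbb{Z}^{p_{n+1}}$ of $\mathbf{Y}^r$ is a free abelian group.
   Context: Young's lattice $\mathbf{Y}$ is the poset of all integer partitions ordered by inclusion of Young diagrams, graded by size; $\mathbf{Y}^r$ has the componentwise order and rank equal to total size. With $P_n$ the set of rank-$n$ elements and $p_n=|P_n|$, the up map $U_n:\mathbb{Z}^{P_n}\to\mathbb{Z}^{P_{n+1}}$ sends each basis element to the sum of all elements covering it. *)

(* Defs.v *)
From mathcomp Require Import all_boot all_order all_algebra.
Set Implicit Arguments. Unset Strict Implicit. Unset Printing Implicit Defensive.
Import GRing.Theory.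
Local Open Scope ring_scope.

(* Candidate r-tuples of partitions of rank n: each component is a
   function 'I_n -> 'I_n.+1, i.e. a sequence of n parts each <= n
   (padded with zeros).  Every partition of size <= n fits. *)
Definition cand (r n : nat) := {ffun 'I_r -> {ffun 'I_n -> 'I_n.+1}}.

Definition entry r n (x : cand r n) (i : 'I_r) (j : nat) : nat :=
  match (insub j : option 'I_n) with Some j' => nat_of_ord (x i j') | None => 0%N end.

Definition is_part r n (x : cand r n) (i : 'I_r) : bool :=
  [forall j : 'I_n, entry x i j.+1 <= entry x i j]%N.

Definition rankY r n (x : cand r n) : nat :=
  (\sum_(i < r) \sum_(j < n) entry x i j)%N.

Definition Pset (r n : nat) : {set cand r n} :=
  [set x | [forall i, is_part x i] && (rankY x == n)].

Definition leY r m n (x : cand r m) (y : cand r n) : bool :=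
  [forall i : 'I_r, forall j : 'I_m, entry x i j <= entry y i j]%N.

Definition coversY r m n (x : cand r m) (y : cand r n) : bool :=
  leY x y && (rankY y == (rankY x).+1).

(* The up map U_n : Z^{P_n} -> Z^{P_{n+1}}, as an integer matrix acting on
   row vectors (v |-> v *m upmap r n); basis of Z^{P_n} indexed by enum of P_n. *)
Definition upmap (r n : nat) : 'M[int]_(#|Pset r n|, #|Pset r n.+1|) :=
  \matrix_(i, j) (coversY (enum_val i) (enum_val j))%:R.

(* The cokernel Z^k / (Z^m *m U) is a free abelian group: it is isomorphic to
   Z^d for some d, i.e. there is a surjective Z-linear map Z^k -> Z^d (given by
   an integer matrix) whose kernel is exactly the image of U. *)
Definition cokernel_free (m k : nat) (U : 'M[int]_(m, k)) : Prop :=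
  exists (d : nat) (M : 'M[int]_(k, d)),
    (forall w : 'rV[int]_d, exists v : 'rV[int]_k, v *m M = w) /\
    (forall v : 'rV[int]_k, v *m M = 0 <-> exists u : 'rV[int]_m, v = u *m U).

(* Main.v *)
Require Import Defs.
From mathcomp Require Import all_boot all_order all_algebra.
From mathcomp Require Import zify.
From Stdlib Require Import ClassicalEpsilon.
Set Implicit Arguments. Unset Strict Implicit. Unset Printing Implicit Defensive.
Import GRing.Theory.
Local Open Scope ring_scope.

Lemma down_ind (P : nat -> Prop) (H : nat) :
  P H -> (forall L, (L < H)%N -> P L.+1 -> P L) -> P 0%N.
Proof.
move=> PH step.
have K: forall t, (t <= H)%N -> P (H - t)%N.
  elim=> [|t IH] ht; first by rewrite subn0.
  have E: (H - t = (H - t.+1).+1)%N by lia.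
  apply: step; first by lia.
  by rewrite -E; apply: IH; lia.
by have := K H (leqnn H); rewrite subnn.
Qed.

Lemma uniq_dec m k (U : 'M[int]_(m,k)) (g : 'I_m -> 'I_k) (h : 'I_m -> nat) (H : nat)
  (hH : forall i, (h i < H)%N) (Ug : forall i, U i (g i) = 1)
  (Ut : forall i i', i' != i -> U i' (g i) != 0 -> (h i < h i')%N)
  (u : 'rV[int]_m) : (forall i, (u *m U) 0 (g i) = 0) -> u = 0.
Proof.
move=> Hu.
suff P: forall i, (0 <= h i)%N -> u 0 i = 0.
  by apply/rowP=> i; rewrite mxE P.
apply: (@down_ind (fun L => forall i, (L <= h i)%N -> u 0 i = 0) H).
  by move=> i; rewrite leqNgt hH.
move=> L _ IH j hj.
have := Hu j; rewrite mxE (bigD1 j) //= Ug mulr1 big1 ?addr0 //.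
move=> i nij; have [->|nz] := eqVneq (U i (g j)) 0; first by rewrite mulr0.
by rewrite IH ?mul0r //; apply: leq_ltn_trans hj (Ut j i nij nz).
Qed.

Lemma exist_dec m k (U : 'M[int]_(m,k)) (g : 'I_m -> 'I_k) (h : 'I_m -> nat) (H : nat)
  (hH : forall i, (h i < H)%N) (Ug : forall i, U i (g i) = 1)
  (Ut : forall i i', i' != i -> U i' (g i) != 0 -> (h i < h i')%N)
  (v : 'rV[int]_k) : exists u : 'rV[int]_m, forall i, (v - u *m U) 0 (g i) = 0.
Proof.
suff [u Hu]: exists u : 'rV[int]_m, forall i, (0 <= h i)%N -> (v - u *m U) 0 (g i) = 0.
  by exists u => i; apply: Hu.
apply: (@down_ind (fun L => exists u : 'rV[int]_m, forall i, (L <= h i)%N -> (v - u *m U) 0 (g i) = 0) H).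
  by exists 0 => i; rewrite leqNgt hH.
move=> L _ [u Hu].
pose c : 'rV[int]_m := \row_i (if h i == L then (v - u *m U) 0 (g i) else 0).
have cU : forall j, (L <= h j)%N -> (c *m U) 0 (g j) = c 0 j.
  move=> j hj; rewrite mxE (bigD1 j) //= Ug mulr1 big1 ?addr0 //.
  move=> i nij; rewrite /c mxE; case: eqP => [hiL|]; last by rewrite mul0r.
  have [->|nz] := eqVneq (U i (g j)) 0; first by rewrite mulr0.
  have := Ut j i nij nz; lia.
exists (u + c) => j hj.
have E : (v - (u + c) *m U) 0 (g j) = (v - u *m U) 0 (g j) - (c *m U) 0 (g j).
  by rewrite mulmxDl opprD addrA !mxE.
have cE : c 0 j = if h j == L then (v - u *m U) 0 (g j) else 0 by rewrite mxE.
rewrite E cU // cE; case: ifP => [_|ne]; first by rewrite subrr.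
by rewrite Hu ?subrr //; move/negbT: ne; lia.
Qed.

Lemma coker_free_tri m k (U : 'M[int]_(m,k)) (g : 'I_m -> 'I_k) (h : 'I_m -> nat) (H : nat)
  (hH : forall i, (h i < H)%N) (Ug : forall i, U i (g i) = 1)
  (Ut : forall i i', i' != i -> U i' (g i) != 0 -> (h i < h i')%N) :
  cokernel_free U.
Proof.
have ex := exist_dec hH Ug Ut.
have un := uniq_dec hH Ug Ut.
pose uf (v : 'rV[int]_k) := proj1_sig (constructive_indefinite_description _ (ex v)).
have ufP v : forall i, (v - uf v *m U) 0 (g i) = 0.
  exact: proj2_sig (constructive_indefinite_description _ (ex v)).
pose C := [set j : 'I_k | [forall i, j != g i]].
pose Umat : 'M[int]_(k, m) := \matrix_(j, i) (uf (delta_mx 0 j)) 0 i.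
pose W : 'M[int]_k := 1%:M - Umat *m U.
have Wg : forall j i, W j (g i) = 0.
  move=> j i; rewrite -(ufP (delta_mx 0 j) i) !mxE; congr (_ - _).
  - by rewrite eq_sym.
  - by apply: eq_bigr => l _; rewrite !mxE.
have vWg : forall (v : 'rV[int]_k) i, (v *m W) 0 (g i) = 0.
  by move=> v i; rewrite mxE big1 // => j _; rewrite Wg mulr0.
have vWE : forall v : 'rV[int]_k, v *m W = v - v *m Umat *m U.
  by move=> v; rewrite /W mulmxBr mulmx1 mulmxA.
pose Sel : 'M[int]_(k, #|C|) := \matrix_(j, c) ((j == enum_val c)%:R).
have SelE : forall (x : 'rV[int]_k) c, (x *m Sel) 0 c = x 0 (enum_val c).
  move=> x c; rewrite mxE (bigD1 (enum_val c)) //= mxE eqxx mulr1 big1 ?addr0 //.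
  by move=> j /negbTE nj; rewrite mxE nj mulr0.
have Wcols : forall x : 'rV[int]_k, (forall i, x 0 (g i) = 0) -> (forall c : 'I_#|C|, x 0 (enum_val c) = 0) -> x = 0.
  move=> x H1 H2; apply/rowP => j; rewrite mxE.
  case jC: (j \in C).
    by rewrite -(enum_rankK_in jC jC) H2.
  move: jC; rewrite inE => /negbT; rewrite negb_forall => /existsP [i].
  by rewrite negbK => /eqP ->; rewrite H1.
exists #|C|, (W *m Sel); split.
  move=> w; exists (w *m Sel^T).
  set v := w *m Sel^T.
  have vg : forall i, v 0 (g i) = 0.
    move=> i; rewrite mxE big1 // => c _; rewrite !mxE.
    have : enum_val c \in C by apply: enum_valP.
    rewrite inE => /forallP /(_ i); case: eqP => [->|]; first by rewrite eqxx.
    by move=> ne _; rewrite (_ : (g i == enum_val c) = false) ?mulr0 //; apply/eqP => E; apply: ne.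
  have a0 : v *m Umat = 0.
    apply: un => i; have := vWg v i; rewrite vWE [X in X = 0 -> _]mxE vg.
    by rewrite mxE add0r => /eqP; rewrite oppr_eq0 => /eqP.
  rewrite mulmxA vWE a0 mul0mx subr0; apply/rowP => c; rewrite SelE mxE.
  rewrite (bigD1 c) //= !mxE eqxx mulr1 big1 ?addr0 //.
  move=> c' nc; rewrite !mxE; case: eqP => [/enum_val_inj E|]; last by rewrite mulr0.
  by rewrite E eqxx in nc.
move=> v; split.
  move=> vM; exists (v *m Umat).
  have : v *m W = 0.
    apply: Wcols; first exact: vWg.
    by move=> c; rewrite -SelE mulmxA in vM *; rewrite vM mxE.
  by rewrite vWE => /eqP; rewrite subr_eq0 => /eqP.
move=> [u ->].
have : u - u *m U *m Umat = 0.
  apply: un => i; have := vWg (u *m U) i.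
  by rewrite vWE mulmxBl -!mulmxA.
move=> E; by rewrite mulmxA vWE -mulmxBl E !mul0mx.
Qed.

Local Open Scope nat_scope.
Definition fup r n (i0 : 'I_r) (x : cand r n) : cand r n.+1 :=
  [ffun i => [ffun j : 'I_n.+1 => inord (entry x i j + ((i == i0) && (j == 0 :> nat)))]].

Lemma entry_le r n (x : cand r n) i j : entry x i j <= n.
Proof. by rewrite /entry; case: insub => // j'; rewrite -ltnS ltn_ord. Qed.

Lemma entry_out r n (x : cand r n) i j : n <= j -> entry x i j = 0.
Proof. by move=> hj; rewrite /entry insubN // -leqNgt. Qed.

Lemma entry_ord r n (x : cand r n) i (j : 'I_n) : entry x i j = x i j.
Proof. by rewrite /entry valK. Qed.

Lemma entry_f r n i0 (x : cand r n) i j :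
  entry (fup i0 x) i j = entry x i j + ((i == i0) && (j == 0)).
Proof.
rewrite {1}/entry; case: insubP => [j' jlt <-|].
  rewrite /fup !ffunE inordK //; have := entry_le x i j'; case: (_ && _) => /=; lia.
rewrite -leqNgt => hj; rewrite entry_out ?(ltnW hj) //.
have -> : (j == 0) = false by apply/eqP; lia.
by rewrite andbF.
Qed.

Lemma entry_ext r n (x y : cand r n) :
  (forall i (j : 'I_n), entry x i j = entry y i j) -> x = y.
Proof.
move=> E; apply/ffunP => i; apply/ffunP => j; apply: val_inj => /=.
by rewrite -!entry_ord E.
Qed.

Lemma part_le r n (x : cand r n) i : is_part x i -> forall j, entry x i j.+1 <= entry x i j.
Proof.
move=> /forallP hx j; case: (ltnP j n) => hj.
  exact: (hx (Ordinal hj)).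
by rewrite entry_out // ltnW.
Qed.

Lemma rank_f r n i0 (x : cand r n) : rankY (fup i0 x) = (rankY x).+1.
Proof.
rewrite /rankY.
have E : forall i : 'I_r, \sum_(j < n.+1) entry (fup i0 x) i j = \sum_(j < n) entry x i j + (i == i0).
  move=> i; under eq_bigr => j _ do rewrite entry_f.
  rewrite big_split /= big_ord_recr /= entry_out // addn0; congr (_ + _).
  rewrite big_ord_recl /= andbT big1 ?addn0 // => j _.
  by rewrite andbF.
under eq_bigr => i _ do rewrite E.
have S1 : \sum_(i < r) ((i == i0) : nat) = 1.
  by rewrite (bigD1 i0) //= eqxx big1 // => i /negbTE ->.
by rewrite big_split /= S1 addn1.
Qed.

Lemma f_in r n i0 (x : cand r n) : x \in Pset r n -> fup i0 x \in Pset r n.+1.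
Proof.
rewrite !inE => /andP [/forallP hp /eqP hr]; apply/andP; split; last by rewrite rank_f hr.
apply/forallP => i; apply/forallP => j; rewrite !entry_f.
rewrite /= andbF addn0; have := part_le (hp i) j; lia.
Qed.

Lemma covers_f r n i0 (x : cand r n) : coversY x (fup i0 x).
Proof.
apply/andP; split; last by rewrite rank_f.
by apply/forallP => i; apply/forallP => j; rewrite entry_f leq_addr.
Qed.

Lemma sum_strict a (F G : 'I_a -> nat) i1 :
  (forall i, F i <= G i) -> F i1 < G i1 -> \sum_(i < a) F i < \sum_(i < a) G i.
Proof.
move=> FG lt1; rewrite (bigD1 i1) // [X in _ < X](bigD1 i1) //=.
rewrite -addSn; apply: leq_add => //; apply: leq_sum => i _; exact: FG.
Qed.

Lemma key r n i0 (x x' : cand r n) : x \in Pset r n -> x' \in Pset r n ->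
  coversY x' (fup i0 x) -> x' != x -> entry x i0 0 < entry x' i0 0.
Proof.
rewrite !inE => /andP [_ /eqP rx] /andP [_ /eqP rx'] /andP [/forallP le _] ne.
rewrite ltnNge; apply/negP => h0.
have le2 : forall i (j : 'I_n), entry x' i j <= entry x i j.
  move=> i j; have := forallP (le i) j; rewrite entry_f.
  case: (eqVneq i i0) => [->|]; last by rewrite andFb addn0.
  case: (eqVneq (j : nat) 0) => [->|]; first by [].
  by move=> _ /=; rewrite addn0.
case ex: [exists i, exists j : 'I_n, entry x' i j != entry x i j].
  move/existsP: ex => [i /existsP [j nij]].
  have : rankY x' < rankY x.
    apply: (@sum_strict _ _ _ i) => [i2|]; first by apply: leq_sum => j2 _; apply: le2.
    apply: (@sum_strict _ _ _ j) => [j2|]; first by apply: le2.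
    by rewrite ltn_neqAle nij le2.
  by rewrite rx rx' ltnn.
move/negbT: ex => /existsPn ex; move/eqP: ne; apply; apply: entry_ext => i j.
by have /existsPn /(_ j) := ex i; rewrite negbK => /eqP.
Qed.

Theorem proposition6p5 (r n : nat) : (1 <= r)%N -> cokernel_free (upmap r n).
Proof.
move=> hr; pose i0 : 'I_r := Ordinal hr.
pose g (i : 'I_#|Pset r n|) : 'I_#|Pset r n.+1| :=
  enum_rank_in (f_in i0 (enum_valP i)) (fup i0 (enum_val i)).
have gE : forall i, enum_val (g i) = fup i0 (enum_val i).
  by move=> i; rewrite /g enum_rankK_in // f_in // enum_valP.
apply: (@coker_free_tri _ _ _ g (fun i => entry (enum_val i) i0 0) n.+1).
- by move=> i; rewrite ltnS entry_le.
- by move=> i; rewrite /upmap mxE gE covers_f.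
- move=> i i' ne; rewrite /upmap mxE gE; case cv: coversY => // _.
  apply: key cv _; rewrite ?enum_valP //.
  by apply: contra ne => /eqP /enum_val_inj ->.
Qed.
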